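(* Let $G=(V,E)$ be a graph with $n=|V|$. For all $i\in[0,n]$ and $v\in V$, we have $D_{i,v}=S_{i,v}$, where $S_{i,v}=\{v\}\cup\bigcup\{M_{v,w}\mid w\in V,\ p_v([w]_v)=i\}$.
   Context: Graphs are finite, simple, undirected, with nonempty vertex set. A module of $G=(V,E)$ is a nonempty $M\subseteq V$ such that every $u\in V\setminus M$ is adjacent either to all or to none of the vertices of $M$. For $|V|>1$ and $v\in V$, $D_G(v)$ is: the connected component of $G$ containing $v$ if $G$ is disconnected; otherwise the connected component of $\overline{G}$ containing $v$ if $\overline{G}$ is disconnected; otherwise (both connected, in which case the maximal proper modules of $G$ partition $V$) the maximal proper module of $G$ containing $v$; if $|V|=1$, $D_G(v)=\{v\}$. Define $D_{0,v}=V$ and $D_{i+1,v}=D_{G[D_{i,v}]}(v)$ for $i\in[0,n-1]$. For $v,w\in V$, $M_{v,w}$ is the intersection of all modules of $G$ containing $v$ and $w$. Define $w_1\prec_v w_2$ iff $M_{v,w_2}\subsetneq M_{v,w_1}$; $\prec_v$ is a strict weak order, so incomparability $\sim_v$ w.r.t. $\prec_v$ is an equivalence relation on $V$ with classes $[w]_v$, and $\prec_v$ induces a strict linear order on $V/{\sim_v}$. $p_v\colon V/{\sim_v}\to\mathbb{N}$ assigns to each class its position in this strict linear order, the smallest class receiving $0$. *)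

(* Defs.v *)
(* A simple graph G = (T, e): T a finType (vertex set V),
   e a symmetric irreflexive relation. Induced subgraphs G[X] are given by
   their vertex set X : {set T}. *)
From mathcomp Require Import all_boot all_order.
Set Implicit Arguments. Unset Strict Implicit. Unset Printing Implicit Defensive.

Section ModDecomp.
Variables (T : finType) (e : rel T).

Definition restr (X : {set T}) : rel T :=
  [rel x y | [&& x \in X, y \in X & e x y]].
Definition corestr (X : {set T}) : rel T :=
  [rel x y | [&& x \in X, y \in X, x != y & ~~ e x y]].

Definition is_module (X M : {set T}) : bool :=
  [&& M != set0, M \subset X &
   [forall u in X :\: M, [forall m in M, e u m] || [forall m in M, ~~ e u m]]].

Definition max_proper_module (X M : {set T}) : bool :=
  [&& is_module X M, M != X &
   [forall N : {set T}, [&& is_module X N, N != X & M \subset N] ==> (N == M)]].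

Definition connectedb (r : rel T) (X : {set T}) : bool :=
  [forall x in X, forall y in X, connect r x y].

Definition comp (r : rel T) (X : {set T}) (v : T) : {set T} :=
  [set u in X | connect r v u].

Definition DG (X : {set T}) (v : T) : {set T} :=
  if #|X| <= 1 then [set v]
  else if ~~ connectedb (restr X) X then comp (restr X) X v
  else if ~~ connectedb (corestr X) X then comp (corestr X) X v
  else \bigcup_(M | max_proper_module X M && (v \in M)) M.

Definition Dseq (i : nat) (v : T) : {set T} := iter i (fun X => DG X v) setT.

Definition Mvw (v w : T) : {set T} :=
  \bigcap_(M : {set T} | is_module setT M && (v \in M) && (w \in M)) M.

Definition precv (v w1 w2 : T) : bool := Mvw v w2 \proper Mvw v w1.

Definition clsv (v w : T) : {set T} :=
  [set w' | ~~ precv v w w' && ~~ precv v w' w].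

(* p_v([w]_v): position of [w]_v in the strict linear order on V/~_v,
   i.e. the number of classes strictly below [w]_v *)
Definition pv (v w : T) : nat := #|[set clsv v w' | w' in [set w' | precv v w' w]]|.

Definition Sset (i : nat) (v : T) : {set T} :=
  v |: \bigcup_(w | pv v w == i) Mvw v w.

End ModDecomp.

(* Main.v *)
Require Import Defs.
From mathcomp Require Import all_boot all_order zify.
Require Import Defs.
Set Implicit Arguments. Unset Strict Implicit. Unset Printing Implicit Defensive.


Section Basics.
Variables (T : finType) (e : rel T).
Hypothesis esym : symmetric e.

Lemma modP (X M : {set T}) : is_module e X M ->
  [/\ M != set0, M \subset X &
   forall u m1 m2, u \in X -> u \notin M -> m1 \in M -> m2 \in M -> e u m1 = e u m2].
Proof.
case/and3P=> M0 MX /forallP H; split=> // u m1 m2 uX uM m1M m2M.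
have := implyP (H u); rewrite inE uM uX => /(_ isT) /orP [] /forallP Hm.
  by rewrite (implyP (Hm m1) m1M) (implyP (Hm m2) m2M).
by rewrite (negbTE (implyP (Hm m1) m1M)) (negbTE (implyP (Hm m2) m2M)).
Qed.

Lemma moduleI (X M : {set T}) : M != set0 -> M \subset X ->
  (forall u m1 m2, u \in X -> u \notin M -> m1 \in M -> m2 \in M -> e u m1 = e u m2) ->
  is_module e X M.
Proof.
move=> M0 MX H; apply/and3P; split=> //; apply/forallP=> u; apply/implyP.
rewrite inE => /andP[uM uX].
case/set0Pn: M0 => m0 m0M.
case Eu: (e u m0).
  by apply/orP; left; apply/forallP=> m; apply/implyP=> mM; rewrite (H u m m0).
by apply/orP; right; apply/forallP=> m; apply/implyP=> mM; rewrite (H u m m0) ?Eu.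
Qed.

Lemma mod_lift (X Y : {set T}) : is_module e setT X -> is_module e X Y -> is_module e setT Y.
Proof.
case/modP=> _ _ HX; case/modP=> Y0 YX HY; apply: moduleI => //.
move=> u m1 m2 _ uY m1Y m2Y.
case uX: (u \in X); first exact: HY.
by apply: HX; rewrite ?uX ?in_setT ?(subsetP YX).
Qed.

Lemma mod_restr (X M : {set T}) : is_module e setT M -> M \subset X -> is_module e X M.
Proof.
case/modP=> M0 _ H MX; apply: moduleI => // u m1 m2 _ uM h1 h2.
exact: H (in_setT u) uM h1 h2.
Qed.

Lemma modU (X A B : {set T}) x : is_module e X A -> is_module e X B -> x \in A -> x \in B ->
  is_module e X (A :|: B).
Proof.
case/modP=> A0 AX HA; case/modP=> B0 BX HB xA xB.
apply: moduleI.
- by apply/set0Pn; exists x; rewrite inE xA.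
- by rewrite subUset AX BX.
move=> u m1 m2 uX; rewrite inE negb_or => /andP[uA uB].
have key m : m \in A :|: B -> e u m = e u x.
  by rewrite inE => /orP[] mH; [exact: HA | exact: HB].
by move=> /key -> /key ->.
Qed.

Lemma mod1 (X : {set T}) v : v \in X -> is_module e X [set v].
Proof.
move=> vX; apply: moduleI; first by apply/set0Pn; exists v; rewrite inE.
  by rewrite sub1set.
by move=> u m1 m2 _ _; rewrite !inE => /eqP -> /eqP ->.
Qed.

Lemma connect_ind (r : rel T) (P : pred T) a b : P a ->
  (forall x y, connect r a x -> P x -> r x y -> P y) -> connect r a b -> P b.
Proof.
move=> Pa H /connectP [p pth ->].
suff S : forall p x, connect r a x -> P x -> path r x p -> P (last x p).
  exact: S (connect0 r a) Pa pth.
elim=> [|y q IH] x cx Px //= /andP[rxy pth'].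
apply: IH pth'; [exact: connect_trans cx (connect1 rxy) | exact: H rxy].
Qed.

Lemma max_exists (X M0 : {set T}) : is_module e X M0 -> M0 != X ->
  exists N, max_proper_module e X N && (M0 \subset N).
Proof.
move=> m0 n0.
have P0 : [&& is_module e X M0, M0 != X & M0 \subset M0] by rewrite m0 n0 subxx.
case: (@arg_maxnP _ M0 (fun N => [&& is_module e X N, N != X & M0 \subset N]) (fun N : {set T} => #|N|) P0) => N /and3P[mN nN sN] Hmax.
exists N; rewrite sN andbT; apply/and3P; split=> //.
apply/forallP=> N'; apply/implyP=> /and3P[mN' nN' sNN'].
have := Hmax N'; rewrite mN' nN' (subset_trans sN sNN') => /(_ isT) le.
by rewrite eq_sym eqEcard sNN'; exact: le.
Qed.

Lemma Mvw_sub v w (M : {set T}) : is_module e setT M -> v \in M -> w \in M -> Mvw e v w \subset M.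
Proof. by move=> mM vM wM; apply: bigcap_inf; rewrite mM vM wM. Qed.

Lemma Mvw_in v w : w \in Mvw e v w.
Proof. by apply/bigcapP=> M /andP[]. Qed.

Lemma Mvw_ge v w (A : {set T}) :
  (forall M, is_module e setT M -> v \in M -> w \in M -> A \subset M) -> A \subset Mvw e v w.
Proof. by move=> H; apply/bigcapsP=> M /andP[/andP[]]; apply: H. Qed.

Lemma Mvw_trans v w x : x \in Mvw e v w -> Mvw e v x \subset Mvw e v w.
Proof.
move=> /bigcapP xin; apply/bigcapsP=> M HM; apply: bigcap_inf.
by have xM := xin M HM; case/andP: HM => /andP[-> ->] _; rewrite xM.
Qed.

Definition strong (v : T) (X : {set T}) :=
  forall M, is_module e setT M -> v \in M -> (M \subset X) \/ (X \subset M).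
Definition levelL v (X Y : {set T}) := forall w w', w \in X -> w \notin Y ->
  w' \in X -> w' \notin Y -> w \in Mvw e v w' -> w' \in Mvw e v w.

End Basics.

Section Comp.
Variables (T : finType) (e : rel T) (X : {set T}) (r : rel T).
Hypothesis esym : symmetric e.
Hypothesis rsym : symmetric r.
Hypothesis rX : forall x y, r x y -> (x \in X) && (y \in X).
Hypothesis Hm : forall (M : {set T}) x y w, is_module e X M -> x \in M -> y \in X ->
  y \notin M -> w \in M -> r y x -> r y w.
Hypothesis Hc : forall u c1 c2, u \in X -> c1 \in X -> c2 \in X -> ~~ r u c1 ->
  ~~ r u c2 -> u != c1 -> u != c2 -> e u c1 = e u c2.

Let csym := sym_connect_sym rsym.

Lemma comp_sub a : comp r X a \subset X.
Proof. by apply/subsetP=> x; rewrite inE => /andP[]. Qed.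

Lemma comp_self a : a \in X -> a \in comp r X a.
Proof. by move=> aX; rewrite inE aX connect0. Qed.

Lemma CC1 a b : a \in X -> b \in X -> is_module e X (comp r X a :|: comp r X b).
Proof.
move=> aX bX; apply: moduleI.
- by apply/set0Pn; exists a; rewrite inE comp_self.
- by rewrite subUset !comp_sub.
have nr u m : u \in X -> u \notin comp r X a :|: comp r X b ->
    m \in comp r X a :|: comp r X b -> ~~ r u m.
  move=> uX; rewrite !inE negb_or !uX /= => /andP[ua ub] /orP[] /andP[_ cm];
  apply/negP=> rum.
    by move/negP: ua; apply; apply: connect_trans cm (connect1 _); rewrite rsym.
  by move/negP: ub; apply; apply: connect_trans cm (connect1 _); rewrite rsym.
have sU : comp r X a :|: comp r X b \subset X by rewrite subUset !comp_sub.
move=> u m1 m2 uX uU m1U m2U; apply: Hc => //.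
- exact: (subsetP sU).
- exact: (subsetP sU).
- exact: nr.
- exact: nr.
- by apply: contraNneq uU => ->.
- by apply: contraNneq uU => ->.
Qed.

Lemma CC2 (M : {set T}) a b : is_module e X M -> a \in M -> b \in M ->
  ~~ connect r a b -> comp r X a \subset M.
Proof.
move=> mM aM bM nab; apply/subsetP=> x; rewrite inE => /andP[xX cax].
apply: (@connect_ind _ r (fun z => z \in M) a x aM _ cax) => y z cay yM ryz.
apply/negPn/negP=> zM.
have /andP[_ zX] := rX ryz.
have rzb : r z b by apply: (Hm mM yM zX zM bM); rewrite rsym.
by move/negP: nab; apply; apply: connect_trans (connect_trans cay (connect1 ryz)) (connect1 rzb).
Qed.

Lemma comp_case v : is_module e setT X -> v \in X -> strong e v X -> ~~ connectedb r X ->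
  [/\ is_module e setT (comp r X v), v \in comp r X v, comp r X v \proper X,
      strong e v (comp r X v) & levelL e v X (comp r X v)].
Proof.
move=> mX vX sX ncon.
have mY : is_module e setT (comp r X v).
  by apply: (mod_lift mX); rewrite -[comp r X v]setUid; apply: CC1.
split=> //; first exact: comp_self.
- rewrite properEneq comp_sub andbT; apply/eqP=> YX; move/negP: ncon; apply.
  apply/forallP=> x; apply/implyP=> xX; apply/forallP=> y; apply/implyP=> yX.
  have: x \in comp r X v by rewrite YX.
  have: y \in comp r X v by rewrite YX.
  rewrite !inE xX yX /= => cvy cvx.
  by apply: connect_trans cvy; rewrite csym.
- move=> M mM vM; case: (sX M mM vM) => [MX|XM]; last first.
    by right; exact: subset_trans (comp_sub _) XM.
  case: (boolP (M \subset comp r X v)) => [|/subsetPn [b bM bY]]; first by left.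
  right; apply: (CC2 (mod_restr mM MX) vM bM).
  by move: bY; rewrite inE (subsetP MX _ bM).
- move=> w w' wX wY w'X w'Y wM.
  have: w \in comp r X v :|: comp r X w'.
    apply: (subsetP (Mvw_sub (mod_lift mX (CC1 vX w'X)) _ _)) => //.
      by apply/setUP; left; exact: comp_self.
    by apply/setUP; right; exact: comp_self.
  exact: wM.
  move=> /setUP [wY0|]; first by rewrite wY0 in wY.
  rewrite inE => /andP[_ cw'w].
  apply/bigcapP=> M /andP[/andP[mM vM] wM'].
  case: (sX M mM vM) => [MX|XM]; last exact: (subsetP XM).
  apply: (subsetP (CC2 (mod_restr mM MX) wM' vM _)).
    apply/negP=> cwv; move/negP: wY; apply; by rewrite inE wX csym.
  by rewrite inE w'X csym.
Qed.

End Comp.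

Section Prime.
Variables (T : finType) (e : rel T).
Hypothesis esym : symmetric e.

Lemma max_unique (X N1 N2 : {set T}) v : connectedb (restr e X) X ->
  connectedb (corestr e X) X ->
  max_proper_module e X N1 -> max_proper_module e X N2 -> v \in N1 -> v \in N2 -> N1 = N2.
Proof.
move=> cr cc /and3P[m1 n1 /forallP x1] /and3P[m2 n2 /forallP x2] v1 v2.
have mU := modU m1 m2 v1 v2.
have [s1X _] : N1 \subset X /\ true by case/and3P: m1.
have [s2X _] : N2 \subset X /\ true by case/and3P: m2.
case: (boolP (N1 :|: N2 == X)) => [/eqP UX | nUX]; last first.
  have e1 : N1 :|: N2 == N1 by apply: (implyP (x1 _)); rewrite mU nUX subsetUl.
  have e2 : N1 :|: N2 == N2 by apply: (implyP (x2 _)); rewrite mU nUX subsetUr.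
  by rewrite -(eqP e1) -{2}(eqP e2).
exfalso.
have [b bN2 bN1] : exists2 b, b \in N2 & b \notin N1.
  apply/subsetPn; apply/negP=> s21; move/negP: n1; apply.
  by rewrite -UX eq_sym; apply/eqP/setUidPl.
have [a0 a0X a0N2] : exists2 a, a \in X & a \notin N2.
  apply/subsetPn; apply/negP=> sX2; move/negP: n2; apply.
  by rewrite eqEsubset s2X sX2.
case/modP: m1 => _ _ H1; case/modP: m2 => _ _ H2.
have inN1 a : a \in X -> a \notin N2 -> a \in N1.
  by move=> aX aN2; move: aX; rewrite -UX inE (negbTE aN2) orbF.
have bX : b \in X by apply: (subsetP s2X).
have key a x : a \in X -> a \notin N2 -> x \in N2 -> e a x = e a0 b.
  move=> aX aN2 xN2.
  rewrite (H2 a x b aX aN2 xN2 bN2) esym (H1 b a a0 bX bN1 (inN1 a aX aN2) (inN1 a0 a0X a0N2)).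
  by rewrite esym.
have P0 : (a0 \in X) && (a0 \notin N2) by rewrite a0X a0N2.
have vX : v \in X by apply: (subsetP s1X).
case Ec: (e a0 b).
- have := forallP cc a0; rewrite a0X /= => /forallP /(_ v); rewrite vX /= => cav.
  suff: (v \in X) && (v \notin N2) by rewrite v2 andbF.
  apply: (@connect_ind _ (corestr e X) (fun z => (z \in X) && (z \notin N2)) a0 v P0 _ cav).
  move=> x y _ /andP[xX xN2] /=.
  case/and4P=> _ yX _ nexy; rewrite yX /=; apply/negP=> yN2.
  by rewrite key // Ec in nexy.
- have := forallP cr a0; rewrite a0X /= => /forallP /(_ v); rewrite vX /= => cav.
  suff: (v \in X) && (v \notin N2) by rewrite v2 andbF.
  apply: (@connect_ind _ (restr e X) (fun z => (z \in X) && (z \notin N2)) a0 v P0 _ cav).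
  move=> x y _ /andP[xX xN2] /=.
  case/and3P=> _ yX exy; rewrite yX /=; apply/negP=> yN2.
  by rewrite key // Ec in exy.
Qed.


Lemma prime_case (X : {set T}) v : is_module e setT X -> v \in X -> strong e v X -> 1 < #|X| ->
  connectedb (restr e X) X -> connectedb (corestr e X) X ->
  let Y := \bigcup_(M | max_proper_module e X M && (v \in M)) M in
  [/\ is_module e setT Y, v \in Y, Y \proper X, strong e v Y & levelL e v X Y].
Proof.
move=> mX vX sX cX cr cc Y.
have [N0 /andP[mp0 s0]] : exists N, max_proper_module e X N && ([set v] \subset N).
  apply: max_exists; first exact: mod1.
  by apply/negP=> /eqP E; rewrite -E cards1 in cX.
have vN0 : v \in N0 by rewrite -sub1set.
have YN : Y = N0.
  apply/eqP; rewrite eqEsubset; apply/andP; split.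
    by apply/bigcupsP=> M /andP[mpM vM]; rewrite (max_unique cr cc mpM mp0 vM vN0).
  by apply: (bigcup_sup N0); rewrite mp0 vN0.
rewrite YN.
case/and3P: (mp0) => m0 n0 _.
have s0X : N0 \subset X by case/and3P: m0.
have inN (M : {set T}) : is_module e setT M -> v \in M -> M \subset X -> M != X -> M \subset N0.
  move=> mM vM MX nMX.
  have [N' /andP[mp' sN']] := max_exists (mod_restr mM MX) nMX.
  by rewrite -(max_unique cr cc mp' mp0 (subsetP sN' _ vM) vN0).
split=> //.
- exact: mod_lift mX m0.
- by rewrite properEneq n0 s0X.
- move=> M mM vM; case: (sX M mM vM) => [MX|XM]; last by right; exact: subset_trans s0X XM.
  case: (boolP (M == X)) => [/eqP ->|nMX]; first by right.
  by left; apply: inN.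
- move=> w w' wX wN w'X w'N _; apply/bigcapP=> M /andP[/andP[mM vM] wM].
  case: (sX M mM vM) => [MX|XM]; last exact: (subsetP XM).
  case: (boolP (M == X)) => [/eqP ->|nMX] //.
  by move: wN; rewrite (subsetP (inN M mM vM MX nMX) _ wM).
Qed.

Lemma step (X : {set T}) v : is_module e setT X -> v \in X -> strong e v X -> 1 < #|X| ->
  [/\ is_module e setT (DG e X v), v \in DG e X v, DG e X v \proper X,
      strong e v (DG e X v) & levelL e v X (DG e X v)].
Proof.
move=> mX vX sX cX; rewrite /DG leqNgt cX /=.
case: ifP => [ncr|/negbFE cr].
  apply: comp_case => //.
  - by move=> x y; rewrite /restr /corestr /=; rewrite esym; case: (x \in X); case: (y \in X).
  - by move=> x y; rewrite /restr /corestr /= => /and3P[-> -> _].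
  - move=> M x y w mM xM yX yM wM; rewrite /restr /corestr /= => /and3P[_ _ eyx].
    case/modP: mM => _ MX H.
    by rewrite /restr /corestr /= yX (subsetP MX _ wM) (H y w x).
  - move=> u c1 c2 uX c1X c2X; rewrite /restr /corestr /= uX c1X c2X /= => /negbTE -> /negbTE -> _ _ //.
case: ifP => [ncc|/negbFE cc].
  apply: comp_case => //.
  - by move=> x y; rewrite /restr /corestr /=; rewrite esym eq_sym; case: (x \in X); case: (y \in X).
  - by move=> x y; rewrite /restr /corestr /= => /and4P[-> -> _ _].
  - move=> M x y w mM xM yX yM wM; rewrite /restr /corestr /= => /and4P[_ _ _ neyx].
    case/modP: mM => _ MX H.
    rewrite /restr /corestr /= yX (subsetP MX _ wM) (H y w x) // neyx andbT /=.
    by apply: contraNneq yM => ->.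
  - move=> u c1 c2 uX c1X c2X; rewrite /restr /corestr /= uX c1X c2X /= => n1 n2 d1 d2.
    by move: n1 n2; rewrite d1 d2 /= !negbK => -> ->.
exact: prime_case.
Qed.

End Prime.

Theorem lemma3p15 (T : finType) (e : rel T) (esym : symmetric e)
  (eirr : irreflexive e) :
  forall (i : nat) (v : T), i <= #|T| -> Dseq e i v = Sset e i v.
Proof.
move=> i v _.
pose D j := Dseq e j v.
have DS j : D j.+1 = DG e (D j) v by [].
have D0 : D 0 = setT by [].
have DGv : DG e [set v] v = [set v] by rewrite /DG cards1.
have Inv : forall j, [/\ is_module e setT (D j), v \in D j & strong e v (D j)].
  elim=> [|j [mj vj sj]].
  - rewrite D0; split; last by move=> M _ _; left; apply/subsetP=> x; rewrite in_setT.
    + apply: moduleI; first by apply/set0Pn; exists v; rewrite in_setT.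
        by [].
      by move=> u ? ? _; rewrite in_setT.
    + by rewrite in_setT.
  - rewrite DS; case: (leqP #|D j| 1) => cj.
    + rewrite /DG cj; split; [by apply: mod1; rewrite in_setT | by rewrite inE | ].
      by move=> M _ vM; right; rewrite sub1set.
    + by case: (step esym mj vj sj cj).
have vD j : v \in D j by case: (Inv j).
have Single j : #|D j| <= 1 -> D j = [set v].
  move=> c; apply/eqP; rewrite eq_sym eqEcard sub1set vD cards1; exact: c.
have Dsub j : D j.+1 \subset D j.
  rewrite DS; case: (leqP #|D j| 1) => cj.
    by rewrite (Single j cj) DGv.
  by case: (Inv j) => mj vj sj; case: (step esym mj vj sj cj) => _ _ /proper_sub.
have Dmono j k : j <= k -> D k \subset D j.
  elim: k => [|k IH]; first by rewrite leqn0 => /eqP ->.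
  rewrite leq_eqVlt => /orP[/eqP ->|]; first exact: subxx.
  by rewrite ltnS => /IH; apply: subset_trans.
have Size j : #|D j| <= 1 \/ #|D j| + j <= #|T|.
  elim: j => [|j IH]; first by right; rewrite D0 cardsT addn0.
  case: (leqP #|D j| 1) => cj.
    by left; rewrite DS (Single j cj) DGv cards1.
  right; case: IH => IH; first by rewrite leqNgt cj in IH.
  case: (Inv j) => mj vj sj; case: (step esym mj vj sj cj) => _ _ /proper_card pc _ _.
  rewrite -DS in pc; lia.
have exd : exists j, #|D j| <= 1.
  by exists #|T|; case: (Size #|T|) => // h; apply/leP; lia.
have [d [Hd minD]] : exists d, #|D d| <= 1 /\ forall j, #|D j| <= 1 -> d <= j.
  by case: (ex_minnP exd) => m Pm Hm; exists m.
have Dv j : d <= j -> D j = [set v].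
  move=> dj; rewrite -(subnKC dj); elim: (j - d) => [|k IH].
    by rewrite addn0 Single.
  by rewrite addnS DS IH DGv.
have Dbig j : j < d -> 1 < #|D j|.
  by move=> jd; rewrite ltnNge; apply/negP=> c; have := minD j c; lia.
pose P w j := (w \notin D j.+1) || (#|D j| <= 1).
have exw w : exists j, P w j by exists d; rewrite /P Hd orbT.
have [rk Hrk] : exists rk : T -> nat, forall w, P w (rk w) /\ forall j, P w j -> rk w <= j.
  by exists (fun w => ex_minn (exw w)) => w; case: ex_minnP.
have R0 w : rk w <= d by apply: (Hrk w).2; rewrite /P Hd orbT.
have Rv : rk v = d.
  apply/eqP; rewrite eqn_leq R0 /=; apply: minD.
  by have := (Hrk v).1; rewrite /P vD.
have Rw w : w != v -> [/\ rk w < d, w \in D (rk w) & w \notin D (rk w).+1].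
  move=> wv.
  have win : w \in D (rk w).
    case Ek: (rk w) => [|k]; first by rewrite D0 in_setT.
    apply/negPn/negP=> wn.
    have := (Hrk w).2 k; rewrite /P wn /= Ek => /(_ isT); rewrite ltnn.
    done.
  have lt : rk w < d.
    rewrite ltnNge; apply/negP=> dk; move: win; rewrite (Dv _ dk) inE.
    by rewrite (negbTE wv).
  split=> //; have := (Hrk w).1; rewrite /P => /orP[] // c.
  by have := minD _ c; lia.
have Runiq w k : w != v -> w \in D k -> w \notin D k.+1 -> rk w = k.
  move=> wv wk wk1; apply/eqP; rewrite eqn_leq (Hrk w).2 /P ?wk1 //=.
  rewrite leqNgt; apply/negP=> lt.
  case: (Rw w wv) => _ _ /negP; apply; exact: (subsetP (Dmono _ _ lt)).
have Rin w : w \in D (rk w).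
  by case: (eqVneq w v) => [->|wv]; [exact: vD | case: (Rw w wv)].
have F1 w : Mvw e v w \subset D (rk w).
  by case: (Inv (rk w)) => m vi _; apply: Mvw_sub.
have F2 w : w != v -> D (rk w).+1 \subset Mvw e v w.
  move=> wv; apply: Mvw_ge => M mM vM wM.
  case: (Inv (rk w).+1) => _ _ /(_ M mM vM) [MD|] //.
  by case: (Rw w wv) => _ _ /negP; case; exact: (subsetP MD).
have lt_prec w1 w2 : rk w1 < rk w2 -> precv e v w1 w2.
  move=> lt.
  have w1v : w1 != v by apply/eqP=> E; move: lt; rewrite E Rv ltnNge R0.
  have sub : Mvw e v w2 \subset D (rk w1).+1.
    exact: subset_trans (F1 w2) (Dmono _ _ lt).
  rewrite /precv; apply/properP; split.
    exact: subset_trans sub (F2 w1 w1v).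
  exists w1; first exact: Mvw_in.
  apply/negP=> h; case: (Rw w1 w1v) => _ _ /negP; apply; exact: (subsetP sub).
have prec_rk w1 w2 : precv e v w1 w2 = (rk w1 < rk w2).
  case: (ltngtP (rk w1) (rk w2)) => [lt|gt|eq]; first exact: lt_prec.
    apply/negP=> p; have := lt_prec _ _ gt; move: p.
    by rewrite /precv !properE => /andP[h1 /negP h2] /andP[h3 _]; apply: h2.
  apply/negP; rewrite /precv => p.
  case: (eqVneq w1 v) => [E1|w1v].
    have E2 : w2 = v.
      apply/eqP; apply/negPn/negP=> w2v; case: (Rw w2 w2v) => lt _ _.
      by move: lt; rewrite -eq E1 Rv ltnn.
    by move: p; rewrite E1 E2 properxx.
  have w2v : w2 != v.
    by apply/eqP=> E2; case: (Rw w1 w1v); rewrite eq E2 Rv ltnn.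
  case: (Rw w1 w1v) => lt1 in1 out1.
  case: (Rw w2 w2v) => _ in2 out2.
  case: (Inv (rk w1)) => mj vj sj.
  case: (step esym mj vj sj (Dbig _ lt1)) => _ _ _ _ L.
  rewrite -DS in L.
  have w2in : w2 \in Mvw e v w1 by apply: (subsetP (proper_sub p)); exact: Mvw_in.
  rewrite -eq in in2 out2.
  have := L w2 w1 in2 out2 in1 out1 w2in => /Mvw_trans h.
  by move: p; rewrite properE h andbF.
have surj k : k <= d -> exists x, rk x = k.
  rewrite leq_eqVlt => /orP[/eqP ->|kd]; first by exists v.
  case: (Inv k) => mj vj sj.
  case: (step esym mj vj sj (Dbig _ kd)) => _ _ /properP [_ [x xk xk1]] _ _.
  rewrite -DS in xk1.
  have xv : x != v by apply/eqP=> E; rewrite E vD in xk1.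
  by exists x; apply: Runiq.
have cls w : clsv e v w = [set x | rk x == rk w].
  by apply/setP=> x; rewrite !inE !prec_rk -!leqNgt eqn_leq.
have pv_rk w : pv e v w = rk w.
  rewrite /pv.
  pose f (k : 'I_(rk w)) := [set x | rk x == val k].
  have -> : [set clsv e v w' | w' in [set w' | precv e v w' w]] = [set f k | k : 'I_(rk w)].
    apply/setP=> S; apply/imsetP/imsetP.
      case=> w'; rewrite inE prec_rk => lt ->.
      by exists (Ordinal lt) => //; rewrite cls.
    case=> k _ ->.
    have [x rx] := surj k (leq_trans (ltnW (ltn_ord k)) (R0 w)).
    by exists x; rewrite ?inE ?prec_rk ?rx ?ltn_ord // cls rx.
  rewrite card_imset ?card_ord //.
  move=> k1 k2 E; apply: val_inj.
  have [x rx] := surj k1 (leq_trans (ltnW (ltn_ord k1)) (R0 w)).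
  have : x \in f k1 by rewrite inE rx.
  by rewrite E inE rx => /eqP.
case: (ltnP i d) => id.
- apply/setP=> x; rewrite /Sset; apply/idP/idP.
  + move=> xD; case: (eqVneq x v) => [->|xv]; first exact: setU11.
    apply/setU1P; right; apply/bigcupP.
    case: (Rw x xv) => rx xin xout.
    have ik : i <= rk x.
      rewrite leqNgt; apply/negP=> lt; move/negP: xout; apply.
      exact: (subsetP (Dmono _ _ lt)).
    move: ik; rewrite leq_eqVlt => /orP[/eqP ix|ix].
      by exists x; [rewrite pv_rk ix | exact: Mvw_in].
    have [w rw] := surj i (ltnW id).
    have wv : w != v by apply/eqP=> E; move: id; rewrite -rw E Rv ltnn.
    exists w; first by rewrite pv_rk rw.
    apply: (subsetP (F2 w wv)); rewrite rw.
    exact: (subsetP (Dmono _ _ ix)).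
  + case/setU1P => [->|/bigcupP [w pw xM]]; first exact: vD.
    rewrite pv_rk in pw; rewrite -(eqP pw); exact: (subsetP (F1 w)).
- have -> : Dseq e i v = [set v] := Dv i id.
  apply/setP => x; rewrite /Sset; apply/idP/idP.
    by rewrite inE => /eqP ->; exact: setU11.
  case/setU1P => [->|/bigcupP [w pw xM]]; first by rewrite inE.
  rewrite pv_rk in pw.
  have wv : w = v.
    apply/eqP; apply/negPn/negP=> wv; case: (Rw w wv) => lt _ _.
    by move: lt; rewrite (eqP pw) ltnNge id.
  by move: (subsetP (F1 w) x xM); rewrite wv Rv (Dv d (leqnn d)).
Qed.
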